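(* In the algebra $U_q(L(\mathfrak{sl}_2))$ the following identities hold: $$R^3L-[3]_qR^2LR+[3]_qRLR^2-LR^3=(q-q^{-1})(q^2-q^{-2})(q^3-q^{-3})\,(cc^*K_1R^2K_1-bb^*K_0R^2K_0),$$ $$L^3R-[3]_qL^2RL+[3]_qLRL^2-RL^3=(q-q^{-1})(q^2-q^{-2})(q^3-q^{-3})\,(bb^*K_0L^2K_0-cc^*K_1L^2K_1).$$
   Context: Let $\mathbb F$ be an algebraically closed field and fix nonzero $q\in\mathbb F$ with $q^2\ne1$; write $[n]_q=(q^n-q^{-n})/(q-q^{-1})$. $U_q(\widehat{\mathfrak{sl}}_2)$ is the associative unital $\mathbb F$-algebra with generators $e_i^{\pm},K_i^{\pm1}$ ($i\in\{0,1\}$) and relations $K_iK_i^{-1}=K_i^{-1}K_i=1$, $K_0K_1=K_1K_0$, $K_ie_i^{\pm}K_i^{-1}=q^{\pm2}e_i^{\pm}$, $K_ie_j^{\pm}K_i^{-1}=q^{\mp2}e_j^{\pm}$ ($i\ne j$), $e_i^+e_i^--e_i^-e_i^+=(K_i-K_i^{-1})/(q-q^{-1})$, $e_0^{\pm}e_1^{\mp}=e_1^{\mp}e_0^{\pm}$, and $(e_i^\pm)^3e_j^\pm-[3]_q(e_i^\pm)^2e_j^\pm e_i^\pm+[3]_qe_i^\pm e_j^\pm(e_i^\pm)^2-e_j^\pm(e_i^\pm)^3=0$ ($i\ne j$). $U_q(L(\mathfrak{sl}_2))$ is the quotient of $U_q(\widehat{\mathfrak{sl}}_2)$ by the two-sided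 ideal generated by $K_0K_1-1$; elements are denoted by the same symbols as their images. Fix nonzero $b,c,b^*,c^*\in\mathbb F$ and $u,v,u^*,v^*\in\mathbb F$ with $uv^*=-bb^*q^{-1}(q-q^{-1})^2$ and $vu^*=-cc^*q^{-1}(q-q^{-1})^2$; set $R=ue_0^++ve_1^-K_1$ and $L=u^*e_1^++v^*e_0^-K_0$. *)

(* Defs.v *)
From HB Require Import structures.
From mathcomp Require Import all_boot all_order all_algebra.
Set Implicit Arguments. Unset Strict Implicit. Unset Printing Implicit Defensive.
Import GRing.Theory.
Local Open Scope ring_scope.

Definition qint (F : fieldType) (q : F) (n : nat) : F :=
  (q ^+ n - q ^- n) / (q - q^-1).

Definition qserre (F : fieldType) (A : algType F) (q : F) (x y : A) : A :=
  x ^+ 3 * y - qint q 3 *: (x ^+ 2 * y * x) + qint q 3 *: (x * y * x ^+ 2)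
  - y * x ^+ 3.

(* The defining relations of U_q(L(sl_2)): elements e0p = e_0^+, e0m = e_0^-,
   e1p = e_1^+, e1m = e_1^-, K0, K1 and K0i = K_0^{-1}, K1i = K_1^{-1}
   of an F-algebra A satisfying all relations of U_q(\hat{sl}_2) together with
   K_0 K_1 = 1. *)
Definition UqLsl2_rel (F : fieldType) (A : algType F) (q : F)
  (e0p e0m e1p e1m K0 K1 K0i K1i : A) : Prop :=
  ([/\ [/\ K0 * K0i = 1, K0i * K0 = 1, K1 * K1i = 1, K1i * K1 = 1
        & K0 * K1 = K1 * K0],
      [/\ K0 * e0p * K0i = q ^+ 2 *: e0p, K0 * e0m * K0i = q ^- 2 *: e0m,
          K1 * e1p * K1i = q ^+ 2 *: e1p & K1 * e1m * K1i = q ^- 2 *: e1m],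
      [/\ K0 * e1p * K0i = q ^- 2 *: e1p, K0 * e1m * K0i = q ^+ 2 *: e1m,
          K1 * e0p * K1i = q ^- 2 *: e0p & K1 * e0m * K1i = q ^+ 2 *: e0m],
      [/\ e0p * e0m - e0m * e0p = (q - q^-1)^-1 *: (K0 - K0i),
          e1p * e1m - e1m * e1p = (q - q^-1)^-1 *: (K1 - K1i),
          e0p * e1m = e1m * e0p & e0m * e1p = e1p * e0m] &
      [/\ qserre q e0p e1p = 0, qserre q e1p e0p = 0,
          qserre q e0m e1m = 0 & qserre q e1m e0m = 0]]
   /\ K0 * K1 = 1).

(* Main.v *)
Require Import Defs.
From HB Require Import structures.
From mathcomp Require Import all_boot all_order all_algebra.
From Stdlib Require Import Ring Field.
From Stdlib Require List.
Set Implicit Arguments. Unset Strict Implicit. Unset Printing Implicit Defensive.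
Import GRing.Theory.
Local Open Scope ring_scope.

Section FT.
Variable F : fieldType.
Definition Zzero : F := 0.
Definition Zone : F := 1.
Definition Zadd (x y : F) : F := x + y.
Definition Zmul (x y : F) : F := x * y.
Definition Zopp (x : F) : F := - x.
Definition Zsub (x y : F) : F := x - y.
Definition Zinv (x : F) : F := x^-1.
Definition Zdiv (x y : F) : F := x / y.
Lemma F_ring : @ring_theory F Zzero Zone Zadd Zmul Zsub Zopp eq.
Proof.
rewrite /Zzero /Zone /Zadd /Zmul /Zsub /Zopp.
split=> //; [exact: add0r|exact: addrC|exact: addrA|exact: mul1r|exact: mulrC|exact: mulrA|exact: mulrDl|exact: subrr].
Qed.
Lemma F_field : @field_theory F Zzero Zone Zadd Zmul Zsub Zopp Zdiv Zinv eq.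
Proof.
split=> //; first exact: F_ring.
  by rewrite /Zone /Zzero => h; move: (oner_neq0 F); rewrite h eqxx.
by rewrite /Zone /Zzero /Zinv /Zmul => p hp; rewrite mulVf //; apply/eqP.
Qed.
End FT.

Inductive cexp := CV of nat | C1 | CAdd of cexp & cexp | CMul of cexp & cexp
  | COpp of cexp | CInv of cexp.
Definition term := (cexp * seq nat)%type.
Definition rule := (seq nat * seq term)%type.

Definition lsc c (l : seq term) : seq term := map (fun t => (CMul c t.1, t.2)) l.
Definition lmul (l1 l2 : seq term) : seq term :=
  flatten (map (fun t1 => map (fun t2 => (CMul t1.1 t2.1, t1.2 ++ t2.2)) l2) l1).
Definition g (i : nat) : seq term := [:: (C1, [:: i])].

Fixpoint find_rule (rs : seq rule) (w : seq nat) : option rule :=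
  if rs is r :: rs' then (if take (size r.1) w == r.1 then Some r else find_rule rs' w)
  else None.
Fixpoint rw_word (rs : seq rule) (w : seq nat) {struct w} : option (seq term) :=
  match find_rule rs w with
  | Some r => Some (map (fun t => (t.1, t.2 ++ drop (size r.1) w)) r.2)
  | None => if w is x :: w' then omap (map (fun t => (t.1, x :: t.2))) (rw_word rs w')
            else None
  end.
Definition step rs (l : seq term) : seq term :=
  flatten (map (fun t => if rw_word rs t.2 is Some l' then lsc t.1 l' else [:: t]) l).
Fixpoint nstep rs n l := if n is n'.+1 then nstep rs n' (step rs l) else l.
Fixpoint insert (t : term) (acc : seq term) : seq term :=
  if acc is s :: acc' then (if s.2 == t.2 then (CAdd s.1 t.1, s.2) :: acc' else s :: insert t acc')
  else [:: t].
Definition collect (l : seq term) := foldr insert [::] l.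

Definition fserre c3 X Y :=
  let X2 := lmul X X in let X3 := lmul X X2 in
  lmul X3 Y ++ lsc (COpp C1) (lsc c3 (lmul (lmul X2 Y) X)) ++
  lsc c3 (lmul (lmul X Y) X2) ++ lsc (COpp C1) (lmul Y X3).

Section Engine.
Variables (F : fieldType) (A : algType F) (env : seq F) (gens : seq A).
Fixpoint ceval (e : cexp) : F :=
  match e with
  | CV i => nth (Zzero F) env i | C1 => Zone F
  | CAdd a b => Zadd (ceval a) (ceval b) | CMul a b => Zmul (ceval a) (ceval b)
  | COpp a => Zopp (ceval a) | CInv a => Zinv (ceval a) end.
Definition wval (w : seq nat) : A := foldr (fun i acc => nth 0 gens i * acc) 1 w.
Fixpoint lval (l : seq term) : A :=
  if l is t :: l' then ceval t.1 *: wval t.2 + lval l' else 0.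
Fixpoint valid (rs : seq rule) : Prop :=
  if rs is r :: rs' then wval r.1 = lval r.2 /\ valid rs' else True.

Lemma wval_cat w1 w2 : wval (w1 ++ w2) = wval w1 * wval w2.
Proof. by elim: w1 => [|i w IH] /=; [rewrite mul1r | rewrite IH mulrA]. Qed.
Lemma lval_cat l1 l2 : lval (l1 ++ l2) = lval l1 + lval l2.
Proof. by elim: l1 => [|t l IH] /=; [rewrite add0r | rewrite IH addrA]. Qed.
Lemma lval_lsc c l : lval (lsc c l) = ceval c *: lval l.
Proof. elim: l => [|t l IH] /=; first by rewrite scaler0. by rewrite IH scalerDr scalerA. Qed.
Lemma lval_app l s : lval (map (fun t => (t.1, t.2 ++ s)) l) = lval l * wval s.
Proof. elim: l => [|t l IH] /=; first by rewrite mul0r. by rewrite IH wval_cat mulrDl scalerAl. Qed.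
Lemma lval_pre x l : lval (map (fun t => (t.1, x :: t.2)) l) = nth 0 gens x * lval l.
Proof. elim: l => [|t l IH] /=; first by rewrite mulr0. by rewrite IH mulrDr scalerAr. Qed.
Lemma lval_lmul l1 l2 : lval (lmul l1 l2) = lval l1 * lval l2.
Proof.
rewrite /lmul; elim: l1 => [|t1 l1 IH] /=; first by rewrite mul0r.
rewrite lval_cat IH mulrDl; congr (_ + _).
clear IH; elim: l2 => [|t2 l2 IH2] /=; first by rewrite mulr0.
by rewrite IH2 mulrDr wval_cat /Zmul -scalerA scalerAr scalerAl.
Qed.
Lemma lval_g i : lval (g i) = nth 0 gens i.
Proof. by rewrite /= /Zone scale1r mulr1 addr0. Qed.

Lemma find_ruleP rs w r : valid rs -> find_rule rs w = Some r ->
  wval w = lval r.2 * wval (drop (size r.1) w).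
Proof.
elim: rs => [|r0 rs IH] //= [h0 hv].
case: ifP => [/eqP ht [<-]|_ /(IH hv) //].
have -> : wval w = wval (take (size r0.1) w ++ drop (size r0.1) w) by rewrite cat_take_drop.
by rewrite wval_cat ht h0.
Qed.
Lemma rw_wordP rs w l : valid rs -> rw_word rs w = Some l -> lval l = wval w.
Proof.
move=> hv; elim: w l => [|x w IH] l /=.
  case E: (find_rule rs [::]) => [r|] // [<-].
  by rewrite lval_app -(find_ruleP hv E).
case E: (find_rule rs (x :: w)) => [r|] /=.
  by move=> [<-]; rewrite lval_app -(find_ruleP hv E).
case E2: (rw_word rs w) => [l'|] //= [<-].
by rewrite lval_pre (IH _ E2).
Qed.
Lemma stepP rs l : valid rs -> lval (step rs l) = lval l.
Proof.
move=> hv; rewrite /step; elim: l => [|t l IH] //=.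
rewrite lval_cat IH; case E: (rw_word rs t.2) => [l'|] /=.
  by rewrite lval_lsc (rw_wordP hv E).
by rewrite addr0.
Qed.
Lemma nstepP rs n l : valid rs -> lval (nstep rs n l) = lval l.
Proof. by move=> hv; elim: n l => //= n IH l; rewrite IH stepP. Qed.
Lemma lval_insert t acc : lval (insert t acc) = lval (t :: acc).
Proof.
elim: acc => [|s acc IH] //=.
case: eqP => [e|_] /=.
  by rewrite e /Zadd scalerDl -addrA addrCA.
by rewrite IH /= addrCA.
Qed.
Lemma lval_collect l : lval (collect l) = lval l.
Proof. by elim: l => //= t l IH; rewrite lval_insert /= IH. Qed.
Lemma lval_zero l : List.Forall (fun t : term => ceval t.1 = Zzero F) l -> lval l = 0.
Proof. by elim => //= t l0 h _ IH; rewrite h IH /Zzero scale0r addr0. Qed.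
Lemma engineP rs n P1 P2 : valid rs ->
  List.Forall (fun t : term => ceval t.1 = Zzero F) (collect (nstep rs n (P1 ++ lsc (COpp C1) P2))) ->
  lval P1 = lval P2.
Proof.
move=> hv /lval_zero; rewrite lval_collect nstepP // lval_cat lval_lsc /= /Zopp /Zone scaleN1r.
by move/eqP; rewrite subr_eq0 => /eqP.
Qed.
Lemma lval_fserre q c3 X Y : ceval c3 = qint q 3 ->
  lval (fserre c3 X Y) = qserre q (lval X) (lval Y).
Proof.
move=> h; rewrite /fserre /qserre !lval_cat !lval_lsc !lval_lmul h /= /Zopp /Zone !scaleN1r !addrA.
by rewrite !exprS expr0 !mulr1.
Qed.
End Engine.

Definition cq := CV 0.
Definition cqi := CInv cq.
Definition cd := CAdd cq (COpp cqi).
Definition cdi := CInv cd.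
Definition cq2 := CMul cq cq.
Definition cqi2 := CInv cq2.
Definition cq3 := CMul cq cq2.
Definition c3 := CMul (CAdd cq3 (COpp (CInv cq3))) cdi.
Definition ck := CMul (CMul cd (CAdd cq2 (COpp cqi2))) (CAdd cq3 (COpp (CInv cq3))).
Definition ccc := COpp (CMul (CMul (CMul (CV 2) (CV 3)) cq) (CInv (CMul cd cd))).
Definition cbb := COpp (CMul (CMul (CMul (CV 1) (CV 4)) cq) (CInv (CMul cd cd))).
Definition kr k i c : rule := ([:: k; i], [:: (c, [:: i; k])]).
Definition Krules : seq rule := [:: kr 4 0 cq2; kr 4 1 cqi2; kr 4 2 cqi2; kr 4 3 cq2;
  kr 5 0 cqi2; kr 5 1 cq2; kr 5 2 cq2; kr 5 3 cqi2;
  ([:: 4; 5], [:: (C1, [::])]); ([:: 5; 4], [:: (C1, [::])])].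
Definition rulesA : seq rule := Krules ++ [:: ([:: 3; 0], [:: (C1, [:: 0; 3])]);
  ([:: 3; 2], [:: (C1, [:: 2; 3]); (COpp cdi, [:: 5]); (cdi, [:: 4])]);
  ([:: 0; 0; 0; 2], [:: (c3, [:: 0; 0; 2; 0]); (COpp c3, [:: 0; 2; 0; 0]); (C1, [:: 2; 0; 0; 0])])].
Definition rulesD : seq rule := Krules ++ [:: ([:: 0; 3], [:: (C1, [:: 3; 0])]);
  ([:: 0; 1], [:: (C1, [:: 1; 0]); (cdi, [:: 4]); (COpp cdi, [:: 5])]);
  ([:: 3; 3; 3; 1], [:: (c3, [:: 3; 3; 1; 3]); (COpp c3, [:: 3; 1; 3; 3]); (C1, [:: 1; 3; 3; 3])])].
Definition fR := lsc (CV 1) (g 0) ++ lsc (CV 2) (lmul (g 3) (g 5)).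
Definition fWa := lsc (CV 3) (g 2).
Definition fWd := lsc (CV 4) (lmul (g 1) (g 4)).
Definition RHSa := lsc (CMul ck ccc) (lmul (lmul (g 5) (lmul fR fR)) (g 5)).
Definition RHSd := lsc (COpp (CMul ck cbb)) (lmul (lmul (g 4) (lmul fR fR)) (g 4)).
Definition Pa := fserre c3 fR fWa ++ lsc (COpp C1) RHSa.
Definition Pd := fserre c3 fR fWd ++ lsc (COpp C1) RHSd.

Arguments ceval : simpl never.

Lemma movK (F : fieldType) (A : algType F) (K Ki x : A) (c : F) :
  Ki * K = 1 -> K * x * Ki = c *: x -> K * x = c *: (x * K).
Proof. by move=> h1 h2; rewrite -[K * x]mulr1 -h1 mulrA h2 scalerAl. Qed.


Lemma qserreD (F : fieldType) (A : algType F) (q : F) (x y z : A) :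
  qserre q x (y + z) = qserre q x y + qserre q x z.
Proof.
rewrite /qserre !(mulrDr, mulrDl) !scalerDr !opprD.
set a1 := x ^+ 3 * y. set a2 := x ^+ 3 * z.
set b1 := qint q 3 *: (x ^+ 2 * y * x). set b2 := qint q 3 *: (x ^+ 2 * z * x).
set c1 := qint q 3 *: (x * y * x ^+ 2). set c2 := qint q 3 *: (x * z * x ^+ 2).
set d1 := y * x ^+ 3. set d2 := z * x ^+ 3.
rewrite (addrACA a1). rewrite (addrACA (a1 - b1)). by rewrite (addrACA (a1 - b1 + c1)).
Qed.

Section Core.
Variable F : fieldType.
Add Field Ffield : (F_field F).
Variables (A : algType F) (q : F) (hq0 : q != 0) (hq2 : q ^+ 2 != 1) (u v us vs : F).
Variables (e0p e0m e1p e1m K0 K1 K0i K1i : A).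
Hypothesis hrel : UqLsl2_rel q e0p e0m e1p e1m K0 K1 K0i K1i.
Definition env := [:: q; u; v; us; vs].
Definition gens := [:: e0p; e0m; e1p; e1m; K0; K1].

Lemma hC1 : ceval env C1 = 1. Proof. by []. Qed.
Lemma hOpp e : ceval env (COpp e) = - ceval env e. Proof. by []. Qed.
Lemma hcq2 : ceval env cq2 = q * q. Proof. by []. Qed.
Lemma hcqi2 : ceval env cqi2 = (q * q)^-1. Proof. by []. Qed.
Lemma hcdi : ceval env cdi = (q - q^-1)^-1. Proof. by []. Qed.
Lemma hc3 : ceval env c3 = qint q 3.
Proof. by rewrite /qint !exprS expr0 !mulr1. Qed.

Lemma hK1iK0 : K1i = K0.
Proof.
case: hrel => [[[hK0i hK0i' hK1i hK1i' hK01] _ _ _ _] h01].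
by rewrite -[K1i]mul1r -h01 -mulrA hK1i mulr1.
Qed.
Lemma hK0iK1 : K0i = K1.
Proof.
case: hrel => [[[hK0i hK0i' hK1i hK1i' hK01] _ _ _ _] h01].
by rewrite -[K0i]mulr1 -h01 mulrA hK0i' mul1r.
Qed.

Lemma validA : valid env gens rulesA.
Proof.
case: hrel => [[[hK0i hK0i' hK1i hK1i' hK01] [c00p c00m c11p c11m] [c01p c01m c10p c10m]
  [comm0 comm1 cE0F1 cF0E1] [s01 s10 s0m s1m]] h01].
rewrite /rulesA /Krules /kr /=.
rewrite ?hC1 ?hOpp ?hcq2 ?hcqi2 ?hcdi ?hc3 !mulr1 !addr0 ?scale1r.
split; first by rewrite (movK hK0i' c00p) expr2.
split; first by rewrite (movK hK0i' c00m) expr2.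
split; first by rewrite (movK hK0i' c01p) expr2.
split; first by rewrite (movK hK0i' c01m) expr2.
split; first by rewrite (movK hK1i' c10p) expr2.
split; first by rewrite (movK hK1i' c10m) expr2.
split; first by rewrite (movK hK1i' c11p) expr2.
split; first by rewrite (movK hK1i' c11m) expr2.
split; first by [].
split; first by rewrite -hK01.
split; first by rewrite cE0F1.
split.
  have e : e1m * e1p = e1p * e1m - (e1p * e1m - e1m * e1p) by rewrite opprB addrCA subrr addr0.
  rewrite e comm1 hK1iK0 scalerBr opprB scaleNr; congr (_ + _); exact: addrC.
split => //.
move: s01; rewrite /qserre => /eqP; rewrite subr_eq0 => /eqP h.
rewrite !exprS expr0 !mulr1 -!mulrA in h.
by rewrite scaleNr -h [- _ + _]addrC addrK addrC subrK.
Qed.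

Lemma validD : valid env gens rulesD.
Proof.
case: hrel => [[[hK0i hK0i' hK1i hK1i' hK01] [c00p c00m c11p c11m] [c01p c01m c10p c10m]
  [comm0 comm1 cE0F1 cF0E1] [s01 s10 s0m s1m]] h01].
rewrite /rulesD /Krules /kr /=.
rewrite ?hC1 ?hOpp ?hcq2 ?hcqi2 ?hcdi ?hc3 !mulr1 !addr0 ?scale1r.
split; first by rewrite (movK hK0i' c00p) expr2.
split; first by rewrite (movK hK0i' c00m) expr2.
split; first by rewrite (movK hK0i' c01p) expr2.
split; first by rewrite (movK hK0i' c01m) expr2.
split; first by rewrite (movK hK1i' c10p) expr2.
split; first by rewrite (movK hK1i' c10m) expr2.
split; first by rewrite (movK hK1i' c11p) expr2.
split; first by rewrite (movK hK1i' c11m) expr2.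
split; first by [].
split; first by rewrite -hK01.
split; first by rewrite cE0F1.
split.
  have e : e0p * e0m = e0m * e0p + (e0p * e0m - e0m * e0p) by rewrite addrCA subrr addr0.
  by rewrite e comm0 hK0iK1 scalerBr scaleNr.
split => //.
move: s1m; rewrite /qserre => /eqP; rewrite subr_eq0 => /eqP h.
rewrite !exprS expr0 !mulr1 -!mulrA in h.
by rewrite scaleNr -h [- _ + _]addrC addrK addrC subrK.
Qed.
Lemma hR : lval env gens fR = u *: e0p + v *: (e1m * K1).
Proof. by rewrite /fR lval_cat !lval_lsc lval_lmul !lval_g /= /Zmul. Qed.

Lemma hs1 : q <> Zzero F.
Proof. by apply/eqP. Qed.
Lemma hs2 : Zadd (Zmul q q) (Zopp (Zone F)) <> Zzero F.
Proof. by rewrite /Zadd /Zmul /Zopp /Zone /Zzero -expr2; apply/eqP; rewrite subr_eq0. Qed.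

Ltac coef := lazy beta iota delta [ceval nth fst snd env]; field;
  repeat split; first [exact hs1 | exact hs2 | idtac].

Lemma partA : qserre q (u *: e0p + v *: (e1m * K1)) (us *: e1p) =
  ceval env (CMul ck ccc) *: (K1 * (u *: e0p + v *: (e1m * K1)) ^+ 2 * K1).
Proof.
have hW : lval env gens fWa = us *: e1p by rewrite /fWa !lval_lsc lval_g /=.
rewrite -hR -hW -(lval_fserre gens fR fWa hc3).
have -> : ceval env (CMul ck ccc) *: (K1 * lval env gens fR ^+ 2 * K1) = lval env gens RHSa.
  by rewrite /RHSa lval_lsc !lval_lmul !lval_g expr2.
apply: (@engineP _ _ _ _ rulesA 30 _ _ validA).
match goal with |- List.Forall _ (collect ?L) =>
    let r := eval vm_compute in (collect L) in
    rewrite (_ : collect L = r); [ | by vm_compute ] end.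
repeat (apply List.Forall_cons; [coef|]).
exact: List.Forall_nil.
Qed.

Lemma partD : qserre q (u *: e0p + v *: (e1m * K1)) (vs *: (e0m * K0)) =
  ceval env (COpp (CMul ck cbb)) *: (K0 * (u *: e0p + v *: (e1m * K1)) ^+ 2 * K0).
Proof.
have hW : lval env gens fWd = vs *: (e0m * K0) by rewrite /fWd !lval_lsc lval_lmul !lval_g /=.
rewrite -hR -hW -(lval_fserre gens fR fWd hc3).
have -> : ceval env (COpp (CMul ck cbb)) *: (K0 * lval env gens fR ^+ 2 * K0) = lval env gens RHSd.
  by rewrite /RHSd lval_lsc !lval_lmul !lval_g expr2.
apply: (@engineP _ _ _ _ rulesD 30 _ _ validD).
match goal with |- List.Forall _ (collect ?L) =>
    let r := eval vm_compute in (collect L) in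
    rewrite (_ : collect L = r); [ | by vm_compute ] end.
repeat (apply List.Forall_cons; [coef|]).
exact: List.Forall_nil.
Qed.

Lemma hck : ceval env ck = (q - q^-1) * (q ^+ 2 - q ^- 2) * (q ^+ 3 - q ^- 3).
Proof. by rewrite !exprS expr0 !mulr1. Qed.

Lemma core (b c bs cs : F)
  (huv : u * vs = - b * bs * q^-1 * (q - q^-1) ^+ 2)
  (hvu : v * us = - c * cs * q^-1 * (q - q^-1) ^+ 2) :
  qserre q (u *: e0p + v *: (e1m * K1)) (us *: e1p + vs *: (e0m * K0)) =
  ((q - q^-1) * (q ^+ 2 - q ^- 2) * (q ^+ 3 - q ^- 3)) *:
   ((c * cs) *: (K1 * (u *: e0p + v *: (e1m * K1)) ^+ 2 * K1) -
    (b * bs) *: (K0 * (u *: e0p + v *: (e1m * K1)) ^+ 2 * K0)).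
Proof.
have hvu' : Zmul v us = Zmul (Zmul (Zmul (Zopp c) cs) (Zinv q))
   (Zmul (Zadd q (Zopp (Zinv q))) (Zadd q (Zopp (Zinv q)))).
  by rewrite /Zmul /Zopp /Zadd /Zinv hvu expr2.
have huv' : Zmul u vs = Zmul (Zmul (Zmul (Zopp b) bs) (Zinv q))
   (Zmul (Zadd q (Zopp (Zinv q))) (Zadd q (Zopp (Zinv q)))).
  by rewrite /Zmul /Zopp /Zadd /Zinv huv expr2.
have hccc : ceval env ccc = Zmul c cs.
  lazy beta iota delta [ceval nth env ccc cq cd cqi]; rewrite hvu'; field;
  repeat split; first [exact hs1 | exact hs2 | idtac].
have hcbb : ceval env cbb = Zmul b bs.
  lazy beta iota delta [ceval nth env cbb cq cd cqi]; rewrite huv'; field;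
  repeat split; first [exact hs1 | exact hs2 | idtac].
rewrite qserreD partA partD scalerBr !scalerA.
rewrite (_ : ceval env (COpp (CMul ck cbb)) = - (ceval env ck * ceval env cbb)) // scaleNr.
by rewrite (_ : ceval env (CMul ck ccc) = ceval env ck * ceval env ccc) // hck hccc hcbb.
Qed.
End Core.

Lemma rel_swap (F : fieldType) (A : algType F) (q : F) (e0p e0m e1p e1m K0 K1 K0i K1i : A) :
  UqLsl2_rel q e0p e0m e1p e1m K0 K1 K0i K1i ->
  UqLsl2_rel q e1p e1m e0p e0m K1 K0 K1i K0i.
Proof.
case=> [[[hK0i hK0i' hK1i hK1i' hK01] [c00p c00m c11p c11m] [c01p c01m c10p c10m]
  [comm0 comm1 cE0F1 cF0E1] [s01 s10 s0m s1m]] h01].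
split; last by rewrite -hK01.
split; split=> //; by rewrite ?cE0F1 ?cF0E1.
Qed.

Unset Implicit Arguments.

Theorem lemma6p5 (F : closedFieldType) (q : F)
  (hq0 : q != 0) (hq2 : q ^+ 2 != 1)
  (b c bs cs u v us vs : F)
  (hb : b != 0) (hc : c != 0) (hbs : bs != 0) (hcs : cs != 0)
  (huv : u * vs = - b * bs * q^-1 * (q - q^-1) ^+ 2)
  (hvu : v * us = - c * cs * q^-1 * (q - q^-1) ^+ 2)
  (A : algType F) (e0p e0m e1p e1m K0 K1 K0i K1i : A)
  (hrel : UqLsl2_rel q e0p e0m e1p e1m K0 K1 K0i K1i) :
  let R := u *: e0p + v *: (e1m * K1) in
  let L := us *: e1p + vs *: (e0m * K0) in
  let k := (q - q^-1) * (q ^+ 2 - q ^- 2) * (q ^+ 3 - q ^- 3) in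
  qserre q R L = k *: ((c * cs) *: (K1 * R ^+ 2 * K1) - (b * bs) *: (K0 * R ^+ 2 * K0))
  /\
  qserre q L R = k *: ((b * bs) *: (K0 * L ^+ 2 * K0) - (c * cs) *: (K1 * L ^+ 2 * K1)).
Proof.
move=> R L k; split.
  exact: (core hq0 hq2 hrel huv hvu).
have hvu' : us * v = - c * cs * q^-1 * (q - q^-1) ^+ 2 by rewrite mulrC.
have huv' : vs * u = - b * bs * q^-1 * (q - q^-1) ^+ 2 by rewrite mulrC.
exact: (core hq0 hq2 (rel_swap hrel) hvu' huv').
Qed.
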